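(* Let $n\ge 1$ and let $A=[a_{ij}]\in\{0,1\}^{2n\times 2n}$ be symmetric with zero diagonal, with row sums $r_i=\sum_j a_{ij}$. Then for each $i\in\{1,\dots,2n\}$, $$(\mathrm{hafn}\, A)^{\mathrm{hafn}\, A}\le r_i^{\mathrm{hafn}\, A}\prod_{j:\, a_{ij}=1}\big(\mathrm{hafn}\, A(i,j)\big)^{\mathrm{hafn}\, A(i,j)},$$ with the convention $0^0=1$.
   Context: For a real symmetric $2n\times 2n$ matrix $A=[a_{ij}]$, the hafnian is $\mathrm{hafn}\, A=\sum \prod_{k=1}^n a_{i_kj_k}$, where the sum runs over all partitions $\{\{i_1,j_1\},\dots,\{i_n,j_n\}\}$ of $\{1,\dots,2n\}$ into $n$ pairs (with $i_k<j_k$); the hafnian of the empty $0\times0$ matrix is $1$. $A(i,j)$ is the matrix obtained from $A$ by deleting rows $i,j$ and columns $i,j$. *)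

(* Defs.v *)
From HB Require Import structures.
From mathcomp Require Import all_boot all_order all_algebra all_fingroup.
Set Implicit Arguments. Unset Strict Implicit. Unset Printing Implicit Defensive.

(* A perfect matching of the index set S (a subset of 'I_m) is encoded as a
   permutation s of 'I_m that fixes every point outside S and is a
   fixed-point-free involution on S; its pairs are {x, s x} for x in S.
   This is a bijection between partitions of S into pairs and such s. *)
Definition pmatching (m : nat) (S : {set 'I_m}) (s : {perm 'I_m}) : bool :=
  [forall x, if x \in S then (s x != x) && (s (s x) == x) else s x == x].

Definition hafn_on (m : nat) (A : 'M[nat]_m) (S : {set 'I_m}) : nat :=
  \sum_(s : {perm 'I_m} | pmatching S s) \prod_(x in S | x < s x) A x (s x).

Definition hafn (m : nat) (A : 'M[nat]_m) : nat := hafn_on A setT.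

(* hafn A(i,j): hafnian of the matrix obtained by deleting rows and
   columns i and j (indices kept in their original order). *)
Definition hafn_del (m : nat) (A : 'M[nat]_m) (i j : 'I_m) : nat :=
  hafn_on A (setT :\ i :\ j).

(* Main.v *)
Require Import Defs.
From HB Require Import structures.
From mathcomp Require Import all_boot all_order all_algebra all_fingroup.
Set Implicit Arguments. Unset Strict Implicit. Unset Printing Implicit Defensive.
Section AGM.
Import Order.TTheory GRing.Theory Num.Theory.

Lemma ent (I : finType) (B : {pred I}) (h : I -> nat) :
  (\sum_(j in B) h j) ^ (\sum_(j in B) h j) <=
  #|B| ^ (\sum_(j in B) h j) * \prod_(j in B) h j ^ h j.
Proof.
Local Open Scope ring_scope.
set H := (\sum_(j in B) h j).
pose T := {i : I & 'I_(h i)}.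
pose A := [pred p : T | tag p \in B].
pose E := fun p : T => (((h (tag p))%:R : rat)^-1)%R.
have cA : #|A| = H.
  rewrite -sum1_card /H.
  rewrite (eq_bigr (fun i => \sum_(k : 'I_(h i) | true) 1)%N); last first.
    by move=> i _; rewrite sum1_card card_ord.
  by rewrite (sig_big_dep (fun i => i \in B) (fun i (_ : 'I_(h i)) => true)
      (fun i (_ : 'I_(h i)) => 1%N)); apply: eq_bigl => p; rewrite andbT.
have sA : forall (F : I -> rat), \sum_(p in A) F (tag p) = \sum_(i in B) \sum_(k : 'I_(h i) | true) F i.
  move=> F; rewrite (sig_big_dep (fun i => i \in B) (fun i (_ : 'I_(h i)) => true)
      (fun i (_ : 'I_(h i)) => F i)); by apply: eq_bigl => p; rewrite andbT.
have pA : forall (F : I -> rat), \prod_(p in A) F (tag p) = \prod_(i in B) \prod_(k : 'I_(h i) | true) F i.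
  move=> F; rewrite (sig_big_dep (fun i => i \in B) (fun i (_ : 'I_(h i)) => true)
      (fun i (_ : 'I_(h i)) => F i)); by apply: eq_bigl => p; rewrite andbT.
have := leif_AGM_scaled (A := A) (E := E).
rewrite cA => /(_ _) [].
  by move=> p _; rewrite mulrn_wge0 // /E invr_ge0 ler0n.
move=> le _.
have hS : (\sum_(p in A) E p <= (#|B|)%:R)%R.
  rewrite (sA (fun i => ((h i)%:R : rat)^-1)).
  rewrite -sum1_card natr_sum; apply: ler_sum => i _.
  rewrite sumr_const card_ord.
  case: (h i) => [|k]; first by rewrite mulr0n ler01.
  rewrite -(mulr_natr (((k.+1)%:R : rat)^-1)) mulVf ?pnatr_eq0 //.
have hP : (\prod_(p in A) (E p *+ H) =
           \prod_(i in B) ((H%:R : rat) / (h i)%:R) ^+ h i)%R.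
  rewrite (pA (fun i => ((h i)%:R : rat)^-1 *+ H)).
  apply: eq_bigr => i _; rewrite prodr_const card_ord.
  by rewrite -(mulr_natr ((h i)%:R^-1)) mulrC.
have key : ((H ^ H)%:R : rat) <= ((#|B| ^ H * \prod_(j in B) h j ^ h j)%N)%:R.
  rewrite natrM natr_prod !natrX.
  have -> : ((H%:R : rat) ^+ H) =
    \prod_(i in B) (((H%:R : rat) / (h i)%:R) ^+ h i * (h i)%:R ^+ h i).
    rewrite {1}/H -prodrXr; apply: eq_bigr => i _.
    rewrite -exprMn; case: (h i) => [|k]; first by rewrite !expr0.
    by rewrite mulfVK ?pnatr_eq0.
  rewrite big_split /=.
  rewrite [X in _ <= _ * X](eq_bigr (fun i => (h i)%:R ^+ h i)) => [|i _]; last by rewrite natrX.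
  apply: ler_wpM2r.
    by apply: prodr_ge0 => i _; rewrite exprn_ge0.
  rewrite -hP; apply: (le_trans le); apply: lerXn2r; rewrite ?nnegrE //.
  by apply: sumr_ge0 => p _; rewrite /E invr_ge0 ler0n.
by rewrite ler_nat in key.
Qed.
End AGM.



Lemma pm_equiv m (i j : 'I_m) (s : {perm 'I_m}) : i != j ->
  (pmatching setT (tperm i j * s) && ((tperm i j * s)%g i == j)) =
  pmatching (setT :\ i :\ j) s.
Proof.
move=> nij.
have inS : forall x, (x \in setT :\ i :\ j) = (x != j) && (x != i).
  by move=> x; rewrite !in_setD1 in_setT andbT.
apply/idP/idP.
- case/andP=> /forallP H /eqP ui.
  rewrite permM tpermL in ui.
  have Hx : forall x, (tperm i j * s)%g x != x /\ (tperm i j * s)%g ((tperm i j * s)%g x) = x.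
    by move=> x; have := H x; rewrite in_setT => /andP[-> /eqP ->].
  have si : s i = i.
    have [_] := Hx i; rewrite !permM tpermL ui tpermR => ->; done.
  apply/forallP => x; rewrite inS.
  case: (eqVneq x j) => [->|xj] /=; first by rewrite ui.
  case: (eqVneq x i) => [->|xi] /=; first by rewrite si.
  have [h1 h2] := Hx x.
  have tx : tperm i j x = x by rewrite tpermD // eq_sym.
  rewrite !permM tx in h1 h2; rewrite h1 /=.
  have sxi : s x != i by apply/eqP => e; move: xi; rewrite -si in e; rewrite (perm_inj e) eqxx.
  have sxj : s x != j by apply/eqP => e; move: xj; rewrite -ui in e; rewrite (perm_inj e) eqxx.
  have tsx : tperm i j (s x) = s x by rewrite tpermD // eq_sym.
  by rewrite tsx in h2; rewrite h2.
- move/forallP => H.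
  have si : s i = i by have := H i; rewrite inS eqxx andbF => /eqP.
  have sj : s j = j by have := H j; rewrite inS eqxx => /eqP.
  rewrite permM tpermL sj eqxx andbT.
  apply/forallP => x; rewrite in_setT.
  case: (eqVneq x j) => [->|xj].
    by rewrite !permM tpermR si tpermL sj nij eqxx.
  case: (eqVneq x i) => [->|xi].
    by rewrite !permM tpermL sj tpermR si eq_sym nij eqxx.
  have := H x; rewrite inS xj xi /= => /andP[h1 h2].
  have sxi : s x != i by apply/eqP => e; move: xi; rewrite -si in e; rewrite (perm_inj e) eqxx.
  have sxj : s x != j by apply/eqP => e; move: xj; rewrite -sj in e; rewrite (perm_inj e) eqxx.
  have tx : tperm i j x = x by rewrite tpermD // eq_sym.
  have tsx : tperm i j (s x) = s x by rewrite tpermD // eq_sym.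
  by rewrite !permM tx h1 tsx h2.
Qed.

Lemma prod_equiv m (A : 'M[nat]_m) (hsym : forall i j, A i j = A j i)
  (i j : 'I_m) (s : {perm 'I_m}) : i != j -> pmatching (setT :\ i :\ j) s ->
  \prod_(x in [set: 'I_m] | x < (tperm i j * s)%g x) A x ((tperm i j * s)%g x) =
  A i j * \prod_(x in setT :\ i :\ j | x < s x) A x (s x).
Proof.
move=> nij /forallP H.
have inS : forall x, (x \in setT :\ i :\ j) = (x != j) && (x != i).
  by move=> x; rewrite !in_setD1 in_setT andbT.
have si : s i = i by have := H i; rewrite inS eqxx andbF => /eqP.
have sj : s j = j by have := H j; rewrite inS eqxx => /eqP.
have ux : forall x, x \in setT :\ i :\ j -> (tperm i j * s)%g x = s x.
  move=> x; rewrite inS => /andP[xj xi].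
  by rewrite permM tpermD // eq_sym.
rewrite (bigID (fun x => x \in setT :\ i :\ j)) /= [RHS]mulnC; congr (_ * _).
  apply: eq_big => x.
    case xS: (x \in setT :\ i :\ j); rewrite ?andbF ?andbT //.
    by rewrite in_setT ux.
  by case/andP=> _ xS; rewrite ux.
have ui : (tperm i j * s)%g i = j by rewrite permM tpermL sj.
have uj : (tperm i j * s)%g j = i by rewrite permM tpermR si.
case: (ltngtP i j) => [lt|gt|eq].
- rewrite (big_pred1 i) ?ui // => x /=; rewrite in_setT inS.
  case: (eqVneq x j) => [->|xj] /=; first by rewrite uj ltnNge ltnW // eq_sym (negbTE nij).
  case: (eqVneq x i) => [->|xi] /=; first by rewrite ui lt.
  by rewrite andbF.
- rewrite (big_pred1 j) ?uj 1?hsym // => x /=; rewrite in_setT inS.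
  case: (eqVneq x j) => [->|xj] /=; first by rewrite uj gt.
  case: (eqVneq x i) => [->|xi] /=; first by rewrite ui ltnNge ltnW // (negbTE nij).
  by rewrite andbF.
- by move: nij; rewrite (val_inj eq) eqxx.
Qed.

Lemma hexp m (A : 'M[nat]_m) (hsym : forall i j, A i j = A j i)
  (hdiag : forall i, A i i = 0) (i : 'I_m) :
  hafn A = \sum_(j < m) A i j * hafn_del A i j.
Proof.
rewrite /hafn /hafn_on.
rewrite (partition_big (fun s : {perm 'I_m} => s i) predT) //=.
apply: eq_bigr => j _.
case: (eqVneq i j) => [<-|nij].
  rewrite hdiag mul0n big_pred0 // => s.
  apply/negbTE; apply/andP => -[/forallP H /eqP e].
  by have := H i; rewrite in_setT e eqxx.
rewrite /hafn_del /hafn_on big_distrr /=.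
rewrite (reindex_inj (mulgI (tperm i j))) /=.
apply: eq_big => s; first by rewrite pm_equiv.
by move=> Hs; rewrite prod_equiv // -pm_equiv.
Qed.

Theorem lemma3p1 (n : nat) (hn : 1 <= n) (A : 'M[nat]_(2 * n))
  (h01 : forall i j, A i j <= 1)
  (hsym : forall i j, A i j = A j i)
  (hdiag : forall i, A i i = 0) :
  forall i : 'I_(2 * n),
    hafn A ^ hafn A <=
    (\sum_(j < 2 * n) A i j) ^ hafn A *
    \prod_(j < 2 * n | A i j == 1) hafn_del A i j ^ hafn_del A i j.
Proof.
move=> i.
have A0 : forall j, A i j != 1 -> A i j = 0.
  by move=> j; have := h01 i j; case: (A i j) => [|[|k]].
have eH : hafn A = \sum_(j < 2 * n | A i j == 1) hafn_del A i j.
  rewrite (hexp hsym hdiag i) (bigID (fun j => A i j == 1)) /=.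
  rewrite [X in _ + X]big1 ?addn0 => [|j /A0 ->] //.
  by apply: eq_bigr => j /eqP ->; rewrite mul1n.
have er : \sum_(j < 2 * n) A i j = #|[pred j | A i j == 1]|.
  rewrite -sum1_card (bigID (fun j => A i j == 1)) /=.
  rewrite [X in _ + X]big1 ?addn0 => [|j /A0 ->] //.
  by apply: eq_bigr => j /eqP ->.
rewrite er eH.
exact: (ent [pred j | A i j == 1] (hafn_del A i)).
Qed.
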